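(* $\overline{\mathcal M}_2=\mathcal M_2$; that is, every matroid with a real representation as a $2$-modular matrix also has a real representation as a totally $2$-modular matrix.
   Context: An integer matrix $A$ is $\Delta$-modular if the determinant of every $\operatorname{rank}(A)\times\operatorname{rank}(A)$ submatrix has absolute value at most $\Delta$, and totally $\Delta$-modular if the determinant of every square submatrix has absolute value at most $\Delta$. $\mathcal M_\Delta$ (resp. $\overline{\mathcal M}_\Delta$) is the class of matroids isomorphic to the real vector matroid of the columns of some $\Delta$-modular (resp. totally $\Delta$-modular) matrix. *)

(* Defs.v *)
From HB Require Import structures.
From mathcomp Require Import all_boot all_order all_algebra.
From mathcomp Require Import Rstruct.
From Stdlib Require Rdefinitions.
Set Implicit Arguments. Unset Strict Implicit. Unset Printing Implicit Defensive.
Import Order.TTheory GRing.Theory Num.Theory.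
Local Open Scope ring_scope.

Definition is_matroid (E : finType) (I : {set E} -> bool) : Prop :=
  [/\ I set0,
      (forall X Y : {set E}, X \subset Y -> I Y -> I X) &
      (forall X Y : {set E}, I X -> I Y -> (#|X| < #|Y|)%N ->
         exists2 y, y \in Y :\: X & I (y |: X))].

Definition realmx (m n : nat) (A : 'M[int]_(m, n)) : 'M[Rdefinitions.R]_(m, n) :=
  map_mx (fun z : int => z%:~R) A.

Definition vec_indep (m n : nat) (A : 'M[int]_(m, n)) (S : {set 'I_n}) : bool :=
  \rank (\matrix_(i < m, j < #|S|) (realmx A) i (enum_val j)) == #|S|.

Definition iso_vec_matroid (E : finType) (I : {set E} -> bool)
  (m n : nat) (A : 'M[int]_(m, n)) : Prop :=
  exists phi : E -> 'I_n, bijective phi /\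
    forall S : {set E}, I S = vec_indep A (phi @: S).

Definition Delta_modular (Delta : nat) (m n : nat) (A : 'M[int]_(m, n)) : Prop :=
  forall (f : 'I_(\rank (realmx A)) -> 'I_m) (g : 'I_(\rank (realmx A)) -> 'I_n),
    injective f -> injective g ->
    `|\det (\matrix_(i, j) A (f i) (g j))| <= Delta%:Z.

Definition totally_Delta_modular (Delta : nat) (m n : nat) (A : 'M[int]_(m, n)) : Prop :=
  forall (k : nat) (f : 'I_k -> 'I_m) (g : 'I_k -> 'I_n),
    injective f -> injective g ->
    `|\det (\matrix_(i, j) A (f i) (g j))| <= Delta%:Z.

Definition in_M (Delta : nat) (E : finType) (I : {set E} -> bool) : Prop :=
  exists (m n : nat) (A : 'M[int]_(m, n)), Delta_modular Delta A /\ iso_vec_matroid I A.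

Definition in_Mbar (Delta : nat) (E : finType) (I : {set E} -> bool) : Prop :=
  exists (m n : nat) (A : 'M[int]_(m, n)),
    totally_Delta_modular Delta A /\ iso_vec_matroid I A.

(* Main.v *)
Require Import Defs.
From mathcomp Require Import all_boot all_order all_algebra.
From mathcomp Require Import all_fingroup zify Rstruct.
From Stdlib Require Import Classical.
From Stdlib Require Rdefinitions.
Set Implicit Arguments. Unset Strict Implicit. Unset Printing Implicit Defensive.
Import Order.TTheory GRing.Theory Num.Theory.
Local Open Scope ring_scope.

Section Gen.
Variable R : comRingType.

Lemma det_noninj m p n (X : 'M[R]_(m,p)) (f : 'I_n -> 'I_m) (h : 'I_n -> 'I_p) :
  ~ injective h -> \det (\matrix_(i,j) X (f i) (h j)) = 0.
Proof.
move=> hn; have: ~~ injectiveb h by apply/negP => /injectiveP.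
case/injectivePn => j1 [j2 ne eq].
rewrite -det_tr; apply: (determinant_alternate ne) => i.
by rewrite !mxE eq.
Qed.

Lemma cramer n p (B : 'M[R]_n) (Y : 'M[R]_(n,p)) a c :
  (\adj B *m Y) a c = \det (\matrix_(i,j) if j == a then Y i c else B i j).
Proof.
rewrite mxE (expand_det_col _ a); apply: eq_bigr => i _.
rewrite !mxE eqxx mulrC; congr (_ * _).
rewrite /cofactor; congr (_ * _); congr (\det _); apply/matrixP => u v.
by rewrite !mxE eq_sym (negPf (neq_lift _ _)).
Qed.

Lemma det_conj n (s : 'S_n) (Q : 'M[R]_n) :
  \det (\matrix_(u,v) Q (s u) (s v)) = \det Q.
Proof.
have -> : \matrix_(u,v) Q (s u) (s v) = row_perm s (col_perm s Q).
  by apply/matrixP => u v; rewrite !mxE.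
rewrite row_permE col_permE !det_mulmx !det_perm odd_permV.
by rewrite mulrCA -signr_addb addbb expr0 mulr1.
Qed.


Lemma ext_det r k p (M : 'M[R]_(r, p)) (f : 'I_k -> 'I_r) (g : 'I_k -> 'I_p)
  (g1 : 'I_r -> 'I_p) :
  injective f -> (forall a b, M a (g1 b) = (a == b)%:R) ->
  \det (\matrix_(i,j) M (f i) (g j)) =
  \det (\matrix_(a,b) M a (if [pick j | f j == b] is Some j then g j else g1 b)).
Proof.
move=> finj Mg1.
have le_kr : (k <= r)%N by rewrite -[k]card_ord -[r]card_ord; apply: leq_card finj.
have [l El] : exists l, r = (k + l)%N by exists (r - k)%N; rewrite subnKC.
subst r.
pose h := fun b => if [pick j | f j == b] is Some j then g j else g1 b.
rewrite -[X in _ = \det X]/(\matrix_(a,b) M a (h b)).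
set C := ~: [set f j | j in [set: 'I_k]].
have eCl : #|C| = l.
  have := cardsC [set f j | j in [set: 'I_k]].
  by rewrite card_imset // cardsT !card_ord -/C; lia.
pose tau := fun u : 'I_(k + l) => match split u with
  | inl j => f j | inr c => enum_val (cast_ord (esym eCl) c) end.
have tauE1 j : tau (lshift l j) = f j.
  by rewrite /tau -[lshift l j]/(unsplit (inl j)) unsplitK.
have tauE2 c : tau (rshift k c) = enum_val (cast_ord (esym eCl) c).
  by rewrite /tau -[rshift k c]/(unsplit (inr c)) unsplitK.
have notim c j : f j != tau (rshift k c).
  rewrite tauE2; apply/eqP => E.
  have := enum_valP (cast_ord (esym eCl) c); rewrite -E inE.
  by rewrite imset_f ?inE.
have tau_inj : injective tau.
  move=> u v; rewrite -(splitK u) -(splitK v).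
  case: (split u) => [j|c]; case: (split v) => [j'|c'] /=;
    rewrite -?/(lshift l _) -?/(rshift k _) ?tauE1 ?tauE2.
  - by move=> /finj ->.
  - by move=> E; have := notim c' j; rewrite tauE2 E eqxx.
  - by move=> E; have := notim c j'; rewrite tauE2 E eqxx.
  - by move=> /enum_val_inj /cast_ord_inj ->.
have hE1 j : h (f j) = g j.
  rewrite /h; case: pickP => [j' /eqP /finj -> //|/(_ j)].
  by rewrite eqxx.
have hE2 c : h (tau (rshift k c)) = g1 (tau (rshift k c)).
  rewrite /h; case: pickP => [j' /eqP E|//].
  by have := notim c j'; rewrite E eqxx.
pose s := perm tau_inj.
pose Q' := \matrix_(u,v) (\matrix_(a,b) M a (h b)) (s u) (s v).
transitivity (\det Q'); last exact: det_conj.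
rewrite -[Q'](@submxK _ k l k l).
have -> : ursubmx Q' = 0.
  apply/matrixP => i c; rewrite !mxE !permE tauE1 hE2 Mg1.
  by rewrite (negPf (notim c i)).
have -> : drsubmx Q' = 1%:M.
  apply/matrixP => c c'; rewrite !mxE !permE hE2 Mg1.
  by rewrite (inj_eq tau_inj) eq_rshift.
rewrite det_lblock det1 mulr1; congr (\det _).
by apply/matrixP => i j; rewrite !mxE !permE !tauE1 hE1.
Qed.
End Gen.

Lemma colsel (F : fieldType) m n q (X : 'M[F]_(m,n)) (e : 'I_q -> 'I_n) :
  \matrix_(i,j) X i (e j) = X *m \matrix_(i,j) (i == e j)%:R.
Proof.
apply/matrixP => i j; rewrite !mxE (bigD1 (e j)) //= mxE eqxx mulr1.
rewrite big1 ?addr0 // => u /negPf; rewrite mxE => ->; by rewrite mulr0.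
Qed.

Lemma vec_indep_eqmx m1 m2 n (X1 : 'M[int]_(m1,n)) (X2 : 'M[int]_(m2,n)) T :
  (Defs.realmx X1 :=: Defs.realmx X2)%MS -> vec_indep X1 T = vec_indep X2 T.
Proof.
move=> H; rewrite /vec_indep !colsel.
by rewrite (eqmxMr _ H).
Qed.

Lemma dvd_small (u v : nat) : (0 < u <= 2)%N -> (v <= 2)%N -> (u = 2 -> v <> 1)%N -> (u %| v)%N.
Proof.
by case: u => [|[|[|u]]] //; case: v => [|[|[|v]]] // _ _ /(_ erefl).
Qed.

Local Close Scope ring_scope.
Unset Implicit Arguments.

Theorem mainTheorem8 (E : finType) (I : {set E} -> bool) :
  is_matroid I -> (in_Mbar 2 I <-> in_M 2 I).
Proof.
Local Open Scope ring_scope.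
move=> _; split.
  case=> m [n [A [HT Hiso]]]; exists m, n, A; split=> //.
  by move=> f g fi gi; exact: HT.
case=> m [n [A [HD [phi [phib Hphi]]]]].
set r := \rank (Defs.realmx A).
pose f0 : 'I_r -> 'I_m := maxrankfun (Defs.realmx A).
have f0inj : injective f0 by apply: maxrankfun_inj.
pose AR : 'M[int]_(r,n) := \matrix_(i,j) A (f0 i) j.
have ARE : Defs.realmx AR = rowsub f0 (Defs.realmx A).
  by apply/matrixP => i j; rewrite !mxE.
have eqAR : (Defs.realmx AR :=: Defs.realmx A)%MS.
  by rewrite ARE; apply: eq_maxrowsub.
have rkAR : \rank (Defs.realmx AR) = r by rewrite eqAR.
have fullT : row_full (Defs.realmx AR)^T by rewrite /row_full mxrank_tr rkAR.
pose g0 : 'I_r -> 'I_n := fullrankfun fullT.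
have g0inj : injective g0 by apply: fullrankfun_inj.
pose minor (g : 'I_r -> 'I_n) := \det (\matrix_(i,j) AR i (g j)).
have minorE g : minor g = \det (\matrix_(i,j) A (f0 i) (g j)).
  by rewrite /minor; congr (\det _); apply/matrixP => i j; rewrite !mxE.
have Hb g : injective g -> `|minor g| <= 2.
  by move=> gi; rewrite minorE; apply: HD.
have minorR g : \det (\matrix_(i,j) Defs.realmx AR i (g j)) = (minor g)%:~R.
  rewrite /minor /Defs.realmx -det_map_mx; congr (\det _).
  by apply/matrixP => i j; rewrite !mxE.
have nz0 : minor g0 != 0.
  have := fullrowsub_unit fullT; rewrite unitmxE unitfE -/g0.
  have -> : rowsub g0 (Defs.realmx AR)^T = (\matrix_(i,j) Defs.realmx AR i (g0 j))^T.
    by apply/matrixP => i j; rewrite !mxE.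
  by rewrite det_tr minorR intr_eq0.
have [g1 [g1inj [nzD Pmin]]] : exists g1, injective g1 /\ minor g1 != 0 /\
    (forall g, injective g -> `|minor g1| = 2 -> `|minor g| != 1).
  case: (classic (exists g, injective g /\ `|minor g| = 1)) => [[g [gi g1]]|N].
    exists g; split=> //; split; first by rewrite -normr_eq0 g1.
    by rewrite g1.
  exists g0; split=> //; split=> // g gi _; apply/eqP => Eq; apply: N.
  by exists g.
set D := minor g1.
have D12 : 0 < `|D| <= 2 by rewrite normr_gt0 nzD Hb.
pose B : 'M[int]_r := \matrix_(i,j) AR i (g1 j).
have detB : \det B = D by [].
pose X := \adj B *m AR.
have XE a c : X a c = minor (fun j => if j == a then c else g1 j).
  rewrite /X cramer /minor; congr (\det _); apply/matrixP => i j.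
  by rewrite !mxE; case: eqP.
have Xb a c : `|X a c| <= 2 /\ (`|D| = 2 -> `|X a c| != 1).
  rewrite XE; set h := fun j => _.
  case: (classic (injective h)) => [hi|hn].
    by split; [apply: Hb | apply: Pmin].
  by rewrite /minor (det_noninj AR (fun i => i) hn) normr0.
have dvd a c : (D %| X a c)%Z.
  have [H1 H2] := Xb a c.
  rewrite dvdzE; apply: dvd_small.
  - move: D12; lia.
  - move: H1; lia.
  - move=> E2 E1; have : `|D| = 2 by lia.
    by move/H2/eqP; lia.
pose M : 'M[int]_(r,n) := \matrix_(a,c) (X a c %/ D)%Z.
have XM : X = D *: M.
  by apply/matrixP => a c; rewrite [in RHS]mxE [M a c]mxE mulrC (divzK (dvd a c)).
have BM : B *m M = AR.
  have : D *: (B *m M) = D *: AR.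
    by rewrite scalemxAr -XM /X mulmxA mul_mx_adj detB mul_scalar_mx.
  move/matrixP => H; apply/matrixP => i j; move: (H i j); rewrite !mxE.
  by move/(mulfI nzD).
have Mg1 a b : M a (g1 b) = (a == b)%:R.
  rewrite mxE XE; case: eqP => [<-|/eqP ne].
    have -> : minor (fun j => if j == a then g1 a else g1 j) = D.
      by rewrite /D /minor; congr (\det _); apply/matrixP => i j; rewrite !mxE; case: eqP => [->|].
    by rewrite divzz nzD.
  rewrite /minor det_noninj ?div0z // => hi.
  have := hi a b; rewrite /= eqxx; case: eqP => [_ /(_ erefl) /eqP|_ /(_ erefl) /eqP].
    by rewrite (negPf ne).
  by rewrite (negPf ne).
exists r, n, M; split.
  move=> k f g fi gi; rewrite (ext_det g fi Mg1).
  pose h := fun b => if [pick j | f j == b] is Some j then g j else g1 b.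
  rewrite -[X in `|\det X|]/(\matrix_(a,b) M a (h b)).
  case: (classic (injective h)) => [hi|hn]; last first.
    by rewrite (det_noninj M (fun i => i) hn) normr0.
  have Eh : B *m (\matrix_(a,b) M a (h b)) = \matrix_(i,b) AR i (h b).
    apply/matrixP => i b; rewrite [RHS]mxE -BM !mxE.
    by apply: eq_bigr => j _; rewrite !mxE.
  have := congr1 determinant Eh; rewrite det_mulmx detB -/(minor h) => Em.
  have := Hb h hi; rewrite -Em normrM => H.
  move: D12 H; set x := \det _; nia.
have unitB : Defs.realmx B \in unitmx.
  by rewrite unitmxE unitfE /Defs.realmx det_map_mx detB intr_eq0.
have eqM : (Defs.realmx M :=: Defs.realmx A)%MS.
  apply: eqmx_trans eqAR; rewrite -BM /Defs.realmx map_mxM.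
  apply: eqmx_sym; apply: eqmxMfull; by rewrite row_full_unit.
exists phi; split=> // S; rewrite Hphi.
by symmetry; apply: vec_indep_eqmx.
Qed.
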